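(* Let $L$ be a frame, $X_L$ its Priestley space, and $Y_L$ the spatial part of $X_L$. Then $L$ is a Stone frame if and only if $X_L$ is a Stone L-space. If in addition $L$ is spatial, these conditions are equivalent to $Y_L$ being a Stone space.
   Context: A frame is a complete lattice satisfying $a\wedge\bigvee S=\bigvee\{a\wedge s\mid s\in S\}$. In a frame $L$, $a\ll b$ means whenever $b\le\bigvee S$ there is finite $T\subseteq S$ with $a\le\bigvee T$; $L$ is compact if $1\ll 1$. The pseudocomplement is $a^*=\bigvee\{x\mid a\wedge x=0\}$; $a$ is complemented if $a\vee a^*=1$. $L$ is zero-dimensional if each element is the join of the complemented elements below it; a Stone frame is a compact zero-dimensional frame. $L$ is spatial if completely prime filters separate its elements. A Priestley space is a Stone space $X$ with a partial order such that clopen upsets separate points. An L-space is a Priestley space in which the downset of each clopen set is clopen and the closure of each open upset is open. ${\sf ClopUp}(X)$ is the set of clopen upsets; $\mathrm{cl}$ denotes closure. The Priestley space $X_L$ is the set of prime filters of $L$ ordered by inclusion with topology generated by the sets $\varphi(a)=\{x\mid a\in x\}$ and their complements. The spatial part of $X$ is $Y=\{y\in X\mid{\downarrow}y\text{ clopen}\}$, topologized by declaring $V\subseteq Y$ open iff $V=U\cap Y$ for some $U\in{\sf ClopUp}(X)$. For $U,V\in{\sf ClopUp}(X)$, $V\ll U$ means that for every open upset $W$, $U\subseteq\mathrm{cl}\,W$ implies $V\subseteq W$; $\ker U=\bigcup\{V\in{\sf ClopUp}(X)\mid V\ll U\}$; $X$ is L-compact if $X=\ker X$. A biset is a set that is both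 an upset and a downset; ${\sf ClopBi}(X)$ is the set of clopen bisets; $\mathrm{cen}\,U=\bigcup\{V\in{\sf ClopBi}(X)\mid V\subseteq U\}$. A Stone L-space is an L-compact L-space with $\mathrm{cen}\,U$ dense in $U$ for each $U\in{\sf ClopUp}(X)$. A Stone space is a compact Hausdorff zero-dimensional space. *)

(* Defs.v *)
(* the frame is a mathcomp tbLatticeType equipped with an
   arbitrary-join operation; the (ad hoc) topologies of the paper are given
   by explicit predicates on sets of points. *)
From HB Require Import structures.
From mathcomp Require Import all_boot all_order.
From Stdlib Require List.
Set Implicit Arguments. Unset Strict Implicit. Unset Printing Implicit Defensive.
Import Order.TTheory.
Local Open Scope order_scope.

Definition subset_of (T : Type) (A B : T -> Prop) : Prop := forall x, A x -> B x.

Section Frames.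
Context {disp : Order.disp_t} (L : tbLatticeType disp) (sup : (L -> Prop) -> L).

Record is_frame : Prop := {
  sup_ub : forall (S : L -> Prop) x, S x -> x <= sup S;
  sup_least : forall (S : L -> Prop) y, (forall x, S x -> x <= y) -> sup S <= y;
  frame_distr : forall a (S : L -> Prop),
     Order.meet a (sup S) = sup (fun z => exists s, S s /\ z = Order.meet a s) }.

Definition way_below (a b : L) : Prop :=
  forall S : L -> Prop, b <= sup S ->
    exists t : seq L, (forall s, List.In s t -> S s) /\ a <= sup (fun s => List.In s t).

Definition compact_frame : Prop := way_below \top \top.

Definition pseudocompl (a : L) : L := sup (fun x => Order.meet a x = \bot).

Definition complemented (a : L) : Prop := Order.join a (pseudocompl a) = \top.

Definition zero_dim_frame : Prop :=
  forall a : L, a = sup (fun c => complemented c /\ c <= a).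

Definition stone_frame : Prop := compact_frame /\ zero_dim_frame.

Definition lattice_filter (F : L -> Prop) : Prop :=
  F \top /\ (forall a b, F a -> a <= b -> F b) /\
  (forall a b, F a -> F b -> F (Order.meet a b)).

Definition completely_prime_filter (F : L -> Prop) : Prop :=
  lattice_filter F /\ (forall S : L -> Prop, F (sup S) -> exists s, S s /\ F s).

Definition spatial_frame : Prop :=
  forall a b : L, a <> b ->
    exists F, completely_prime_filter F /\ ((F a /\ ~ F b) \/ (F b /\ ~ F a)).
End Frames.

Section PrimeFilters.
Context {disp : Order.disp_t} (L : tbLatticeType disp).

Definition prime_filter (x : L -> Prop) : Prop :=
  lattice_filter x /\ ~ x \bot /\
  (forall a b, x (Order.join a b) -> x a \/ x b).

Definition XL : Type := { x : L -> Prop | prime_filter x }.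

Definition XL_le (x y : XL) : Prop := subset_of (proj1_sig x) (proj1_sig y).

Definition phi (a : L) : XL -> Prop := fun x => proj1_sig x a.

Definition XL_subbase (U : XL -> Prop) : Prop :=
  exists a : L, U = phi a \/ U = (fun x => ~ phi a x).

End PrimeFilters.

Section Topo.
Context {T : Type}.

Definition generated_opens (B : (T -> Prop) -> Prop) (U : T -> Prop) : Prop :=
  forall x, U x -> exists s : seq (T -> Prop),
    (forall V, List.In V s -> B V) /\ (forall V, List.In V s -> V x) /\
    subset_of (fun y => forall V, List.In V s -> V y) U.

Variable op : (T -> Prop) -> Prop.

Definition closed_set (U : T -> Prop) : Prop := op (fun x => ~ U x).
Definition clopen_set (U : T -> Prop) : Prop := op U /\ closed_set U.
Definition closure (U : T -> Prop) : T -> Prop :=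
  fun x => forall V, op V -> V x -> exists y, V y /\ U y.

Definition compact_space : Prop :=
  forall C : (T -> Prop) -> Prop, (forall U, C U -> op U) ->
    (forall x, exists U, C U /\ U x) ->
    exists s : seq (T -> Prop), (forall U, List.In U s -> C U) /\
      (forall x, exists U, List.In U s /\ U x).

Definition hausdorff_space : Prop :=
  forall x y : T, x <> y -> exists U V, op U /\ op V /\ U x /\ V y /\
    (forall z, ~ (U z /\ V z)).

Definition zero_dim_space : Prop :=
  forall U, op U -> forall x, U x -> exists V, clopen_set V /\ V x /\ subset_of V U.

Definition stone_space : Prop :=
  compact_space /\ hausdorff_space /\ zero_dim_space.

Variable le : T -> T -> Prop.

Definition upset (U : T -> Prop) : Prop := forall x y, U x -> le x y -> U y.
Definition downset (U : T -> Prop) : Prop := forall x y, U x -> le y x -> U y.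
Definition down (U : T -> Prop) : T -> Prop := fun y => exists x, U x /\ le y x.

Definition partial_order : Prop :=
  (forall x, le x x) /\ (forall x y z, le x y -> le y z -> le x z) /\
  (forall x y, le x y -> le y x -> x = y).

Definition clopup (U : T -> Prop) : Prop := clopen_set U /\ upset U.

Definition priestley_space : Prop :=
  stone_space /\ partial_order /\
  (forall x y, ~ le x y -> exists U, clopup U /\ U x /\ ~ U y).

Definition L_space : Prop :=
  priestley_space /\
  (forall U, clopen_set U -> clopen_set (down U)) /\
  (forall U, op U -> upset U -> op (closure U)).

Definition way_below_sp (V U : T -> Prop) : Prop :=
  forall W, op W -> upset W -> subset_of U (closure W) -> subset_of V W.

Definition ker (U : T -> Prop) : T -> Prop :=
  fun x => exists V, clopup V /\ way_below_sp V U /\ V x.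

Definition L_compact : Prop := forall x, ker (fun _ => True) x.

Definition cen (U : T -> Prop) : T -> Prop :=
  fun x => exists V, clopen_set V /\ upset V /\ downset V /\ subset_of V U /\ V x.

Definition stone_L_space : Prop :=
  L_space /\ L_compact /\
  (forall U, clopup U -> subset_of U (closure (cen U))).
End Topo.

Section Spaces.
Context {disp : Order.disp_t} (L : tbLatticeType disp).

Definition XL_opens : (XL L -> Prop) -> Prop := generated_opens (@XL_subbase _ L).

Definition YL : Type :=
  { y : XL L | clopen_set XL_opens (down (@XL_le _ L) (fun z => z = y)) }.

Definition YL_opens (V : YL -> Prop) : Prop :=
  exists U, clopup XL_opens (@XL_le _ L) U /\ V = (fun y => U (proj1_sig y)).
End Spaces.

(* Main.v *)
Require Import Defs.
From mathcomp Require Import all_boot all_order.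
From mathcomp Require classical_sets boolp.
From Stdlib Require Import Classical FunctionalExtensionality PropExtensionality ProofIrrelevance.
From Stdlib Require List.

Lemma zorn_prop (T : Type) (R : T -> T -> Prop) :
  (forall t, R t t) -> (forall r s t, R r s -> R s t -> R r t) ->
  (forall s t, R s t -> R t s -> s = t) ->
  (forall A : T -> Prop, (forall s t, A s -> A t -> R s t \/ R t s) ->
     exists t, forall s, A s -> R s t) ->
  exists t, forall s, R t s -> s = t.
Proof.
move=> Rr Rt Ra Rc.
have [||||t Ht] := @classical_sets.Zorn T (fun a b => boolp.asbool (R a b)).
- by move=> t; apply/boolp.asboolP.
- by move=> r s t /boolp.asboolP H1 /boolp.asboolP H2; apply/boolp.asboolP; eauto.
- by move=> s t /boolp.asboolP H1 /boolp.asboolP H2; eauto.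
- move=> A HA; have [|t Ht] := Rc A.
    move=> s t As At; case: (HA s t As At) => [/boolp.asboolP|/boolp.asboolP]; tauto.
  by exists t => s As; apply/boolp.asboolP; auto.
by exists t => s Hs; apply: Ht; apply/boolp.asboolP.
Qed.

Lemma zorn_sets (U : Type) (P : (U -> Prop) -> Prop) (A0 : U -> Prop) :
  P A0 ->
  (forall Ch : (U -> Prop) -> Prop, (forall A, Ch A -> P A) ->
     (forall A B, Ch A -> Ch B -> subset_of A B \/ subset_of B A) ->
     (exists A, Ch A) -> P (fun u => exists A, Ch A /\ A u)) ->
  exists M, P M /\ subset_of A0 M /\ forall B, P B -> subset_of M B -> subset_of B M.
Proof.
move=> PA0 Pch.
pose T := {A : U -> Prop | P A /\ subset_of A0 A}.
have sigeq : forall s t : T, proj1_sig s = proj1_sig t -> s = t.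
  move=> [s ps] [t pt] /= e; subst t; f_equal; apply: proof_irrelevance.
have [||||t Ht] := @zorn_prop T (fun s t => subset_of (proj1_sig s) (proj1_sig t)).
- by move=> t x.
- by move=> r s t H1 H2 x /H1 /H2.
- move=> s t H1 H2; apply: sigeq; apply: functional_extensionality => x.
  by apply: propositional_extensionality; split; [apply: H1|apply: H2].
- move=> A HA.
  case: (classic (exists s, A s)) => [[s0 As0]|nA]; last first.
    have p0 : P A0 /\ subset_of A0 A0 by split => // x.
    by exists (exist (fun B => P B /\ subset_of A0 B) A0 p0) => s As; exfalso; apply: nA; exists s.
  pose Ch := fun B => exists s, A s /\ proj1_sig s = B.
  have PU : P (fun u => exists B, Ch B /\ B u).
    apply: Pch.
    - by move=> B [s [_ <-]]; case: (proj2_sig s).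
    - by move=> B C [s [As <-]] [t [At <-]]; apply: HA.
    - by exists (proj1_sig s0); exists s0.
  have sU : subset_of A0 (fun u => exists B, Ch B /\ B u).
    move=> x Hx; exists (proj1_sig s0); split; first by exists s0.
    by case: (proj2_sig s0) => _; apply.
  exists (exist (fun B => P B /\ subset_of A0 B) _ (conj PU sU)) => s As x Hx /=.
  by exists (proj1_sig s); split => //; exists s.
exists (proj1_sig t); split; first by case: (proj2_sig t).
split; first by case: (proj2_sig t).
move=> B PB sB.
have pB : P B /\ subset_of A0 B.
  split => // x /((proj2 (proj2_sig t))) /sB //.
have := Ht (exist (fun B => P B /\ subset_of A0 B) B pB) sB => <- //.
Qed.

Import Order.TTheory.
Local Open Scope order_scope.
Set Implicit Arguments. Unset Strict Implicit.

Section Frame.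
Context {disp : Order.disp_t} (L : tbLatticeType disp) (sup : (L -> Prop) -> L)
  (HL : is_frame sup).

Lemma supU (S : L -> Prop) x : S x -> x <= sup S.
Proof. exact: (sup_ub HL). Qed.
Lemma supL (S : L -> Prop) y : (forall x, S x -> x <= y) -> sup S <= y.
Proof. exact: (sup_least HL). Qed.

Lemma sup_ext (S S' : L -> Prop) : (forall z, S z <-> S' z) -> sup S = sup S'.
Proof.
move=> H; apply: le_anti; apply/andP; split; apply: supL => x Hx; apply: supU;
  by apply/H.
Qed.

Lemma sup_pair (a b : L) : sup (fun z => z = a \/ z = b) = a `|` b.
Proof.
apply: le_anti; apply/andP; split.
  by apply: supL => x [->|->]; [apply: leUl|apply: leUr].
by rewrite leUx; apply/andP; split; apply: supU; [left|right].
Qed.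

Lemma sup_empty : sup (fun _ => False) = \bot.
Proof. by apply: le_anti; apply/andP; split; [apply: supL|apply: le0x]. Qed.

Lemma distr (a b c : L) : a `&` (b `|` c) = (a `&` b) `|` (a `&` c).
Proof.
rewrite -sup_pair (frame_distr HL) -sup_pair; apply: sup_ext => z; split.
  by move=> [s [[->|->] ->]]; [left|right].
by move=> [->|->]; eexists; split; [left|reflexivity|right|reflexivity].
Qed.

Lemma meet_sup_le (S : L -> Prop) (c d : L) :
  (forall s, S s -> c `&` s <= d) -> c `&` sup S <= d.
Proof. by move=> H; rewrite (frame_distr HL); apply: supL => z [s [Ss ->]]; apply: H. Qed.

Definition jn (t : seq L) : L := foldr (fun a b => a `|` b) \bot t.
Definition mt (t : seq L) : L := foldr (fun a b => a `&` b) \top t.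

Lemma jn_ub t (a : L) : List.In a t -> a <= jn t.
Proof.
elim: t => //= b t IH [->|H]; first exact: leUl.
exact: le_trans (IH H) (leUr _ _).
Qed.

Lemma jn_least t (y : L) : (forall a, List.In a t -> a <= y) -> jn t <= y.
Proof.
elim: t => [|b t IH] H /=; first exact: le0x.
by rewrite leUx H /= ?IH //; [move=> a Ha; apply: H; right|left].
Qed.

Lemma sup_list t : sup (fun s => List.In s t) = jn t.
Proof.
apply: le_anti; apply/andP; split.
  by apply: supL => x; apply: jn_ub.
by apply: jn_least => a Ha; apply: supU.
Qed.

Lemma mt_lb t (a : L) : List.In a t -> mt t <= a.
Proof.
elim: t => //= b t IH [->|H]; first exact: leIl.
exact: le_trans (leIr _ _) (IH H).
Qed.

Definition imp (a b : L) : L := sup (fun c => c `&` a <= b).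

Lemma impP (a b c : L) : (c <= imp a b) <-> (c `&` a <= b).
Proof.
split=> [H|H]; last by apply: supU.
apply: le_trans (leI2 H (lexx a)) _; rewrite meetC.
by apply: meet_sup_le => s; rewrite meetC.
Qed.

Lemma pc_bot (c : L) : c `&` pseudocompl sup c = \bot.
Proof.
apply: le_anti; apply/andP; split; last exact: le0x.
by apply: meet_sup_le => s ->.
Qed.

Lemma compl_of (c d : L) : c `&` d = \bot -> \top <= c `|` d -> complemented sup c.
Proof.
move=> H1 H2; apply: le_anti; apply/andP; split; first exact: lex1.
apply: le_trans H2 _; apply: leU2 => //; exact: supU.
Qed.

Section PF.
Variable x : L -> Prop.
Hypothesis px : prime_filter x.
Lemma pf_top : x \top. Proof. by case: px => [[]]. Qed.
Lemma pf_up (a b : L) : x a -> a <= b -> x b. Proof. by case: px => [[_ []]]; eauto. Qed.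
Lemma pf_meet (a b : L) : x a -> x b -> x (a `&` b). Proof. by case: px => [[_ []]]; eauto. Qed.
Lemma pf_bot : ~ x \bot. Proof. by case: px => _ []. Qed.
Lemma pf_join (a b : L) : x (a `|` b) -> x a \/ x b. Proof. by case: px => _ []; eauto. Qed.
Lemma pf_jn t : x (jn t) -> exists a, List.In a t /\ x a.
Proof.
elim: t => [|b t IH] /=; first by move/pf_bot.
by case/pf_join => [H|/IH [a [Ha Ha']]]; [exists b; split; [left|]|exists a; split; [right|]].
Qed.
Lemma pf_mt t : (forall a, List.In a t -> x a) -> x (mt t).
Proof.
elim: t => [|b t IH] H /=; first exact: pf_top.
by apply: pf_meet; [apply: H; left|apply: IH => a Ha; apply: H; right].
Qed.
Lemma pf_meetE (a b : L) : x (a `&` b) -> x a /\ x b.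
Proof. by move=> H; split; apply: pf_up H _; [apply: leIl|apply: leIr]. Qed.
Lemma pf_sup S s : S s -> x s -> x (sup S).
Proof. by move=> Ss xs; apply: pf_up xs _; apply: supU. Qed.
Lemma pf_compl (c : L) : complemented sup c -> (x c \/ x (pseudocompl sup c)) /\
   ~ (x c /\ x (pseudocompl sup c)).
Proof.
move=> Hc; split; first by apply: pf_join; rewrite Hc; apply: pf_top.
by move=> [H1 H2]; apply: pf_bot; rewrite -(pc_bot c); apply: pf_meet.
Qed.
End PF.

End Frame.

Import Order.TTheory.
Local Open Scope order_scope.
Set Implicit Arguments. Unset Strict Implicit.

Section PFT.
Context {disp : Order.disp_t} (L : tbLatticeType disp) (sup : (L -> Prop) -> L)
  (HL : is_frame sup).

Lemma pft (F I : L -> Prop) :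
  (forall a b, F a -> a <= b -> F b) -> (forall a b, F a -> F b -> F (a `&` b)) -> F \top ->
  (forall a b, I b -> a <= b -> I a) -> (forall a b, I a -> I b -> I (a `|` b)) -> I \bot ->
  (forall a, F a -> I a -> False) ->
  exists x : XL L, subset_of F (proj1_sig x) /\ (forall a, I a -> ~ proj1_sig x a).
Proof.
move=> Fup Fmeet Ftop Idown Ijoin Ibot FI.
pose P := fun G : L -> Prop => (forall a b, G a -> a <= b -> G b) /\
   (forall a b, G a -> G b -> G (a `&` b)) /\ (forall a, G a -> I a -> False).
have [M [[Mup [Mmeet MI]] [FM Mmax]]] : exists M, P M /\ subset_of F M /\
    forall B, P B -> subset_of M B -> subset_of B M.
  apply: zorn_sets; first by split; [|split].
  move=> Ch ChP Chtot _; split; [|split].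
  - move=> a b [A [ChA Aa]] ab; exists A; split => //.
    by case: (ChP A ChA) => H _; apply: H ab.
  - move=> a b [A [ChA Aa]] [B [ChB Bb]].
    case: (Chtot A B ChA ChB) => sub.
    + exists B; split => //; case: (ChP B ChB) => _ [H _]; apply: H => //; exact: sub.
    + exists A; split => //; case: (ChP A ChA) => _ [H _]; apply: H => //; exact: sub.
  - move=> a [A [ChA Aa]]; case: (ChP A ChA) => _ [_ H]; exact: H.
have Mtop : M \top by apply: FM.
have key : forall a, ~ M a -> exists m, M m /\ I (m `&` a).
  move=> a nMa; apply: NNPP => nex.
  pose Ma := fun c => exists m, M m /\ m `&` a <= c.
  have PMa : P Ma.
    split; [|split].
    - move=> c d [m [Mm H]] cd; exists m; split => //; exact: le_trans H cd.
    - move=> c d [m1 [Mm1 H1]] [m2 [Mm2 H2]]; exists (m1 `&` m2); split; first exact: Mmeet.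
      rewrite lexI; apply/andP; split.
        apply: le_trans _ H1; apply: leI2 => //; exact: leIl.
      apply: le_trans _ H2; apply: leI2 => //; exact: leIr.
    - move=> c [m [Mm H]] Ic; apply: nex; exists m; split => //; exact: Idown Ic H.
  have : Ma a by exists \top; split => //; exact: leIr.
  move=> Maa; apply: nMa; apply: (Mmax Ma PMa _ a Maa).
  by move=> m Mm; exists m; split => //; exact: leIl.
have pM : prime_filter M.
  split; first by split => //; split.
  split; first by move=> Mb; exact: MI Mb Ibot.
  move=> a b Mab; apply: NNPP => nab.
  have [m1 [Mm1 I1]] := key a (fun H => nab (or_introl H)).
  have [m2 [Mm2 I2]] := key b (fun H => nab (or_intror H)).
  apply: (MI ((m1 `&` m2) `&` (a `|` b))); first by apply: (Mmeet) => //; apply: (Mmeet).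
  rewrite (distr HL); apply: Idown (Ijoin _ _ I1 I2) _.
  apply: leU2; apply: leI2 => //; [exact: leIl|exact: leIr].
exists (exist _ M pM); split => //= a Ia Ma; exact: MI Ma Ia.
Qed.

Lemma sep (a b : L) : ~ (a <= b) -> exists x : XL L, proj1_sig x a /\ ~ proj1_sig x b.
Proof.
move=> nab.
have [|||||||x [H1 H2]] := pft (F := fun c => a <= c) (I := fun c => c <= b).
- move=> c d H1 H2; exact: le_trans H1 H2.
- by move=> c d H1 H2; rewrite lexI H1 H2.
- exact: lex1.
- move=> c d H1 H2; exact: le_trans H2 H1.
- by move=> c d H1 H2; rewrite leUx H1 H2.
- exact: le0x.
- move=> c H1 H2; apply: nab; exact: le_trans H1 H2.
by exists x; split; [apply: H1|apply: H2].
Qed.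

Lemma phi_le (a b : L) : (forall x : XL L, phi a x -> phi b x) -> a <= b.
Proof.
move=> H; apply: NNPP => nab; have [x [H1 H2]] := sep nab.
by apply: H2; apply: H.
Qed.

Lemma phi_eq (a b : L) : (forall x : XL L, phi a x <-> phi b x) -> a = b.
Proof.
move=> H; apply: le_anti; apply/andP; split; apply: phi_le => x; case: (H x); auto.
Qed.

End PFT.

Unset Implicit Arguments. Set Strict Implicit.
Import Order.TTheory.
Local Open Scope order_scope.

Lemma list_split_P (T : Type) (P Q : T -> Prop) (s : seq T) :
  (forall U, List.In U s -> P U \/ Q U) ->
  exists s', (forall U, List.In U s' -> P U) /\ (forall U, List.In U s -> List.In U s' \/ Q U).
Proof.
elim: s => [|a s IH] H; first by exists [::]; split.
have [s' [H1 H2]] := IH (fun U HU => H U (or_intror HU)).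
case: (classic (P a)) => Pa.
  exists (a :: s'); split; first by move=> U [<-|HU] //; apply: H1.
  by move=> U [<-|HU]; [left; left|case: (H2 U HU); [left; right|right]].
exists s'; split => // U [<-|HU]; last exact: H2.
by case: (H a (or_introl erefl)) => // ?; right.
Qed.

Lemma cover_combine (T : Type) (M : (T -> Prop) -> Prop) (s : seq (T -> Prop)) :
  (forall B, List.In B s -> exists l, (forall U, List.In U l -> M U) /\
      forall z, B z \/ exists V, List.In V l /\ V z) ->
  exists l, (forall U, List.In U l -> M U) /\
      forall z, (forall B, List.In B s -> B z) \/ exists V, List.In V l /\ V z.
Proof.
elim: s => [|B s IH] H; first by exists [::]; split => // z; left.
have [l1 [H1 H1']] := H B (or_introl erefl).
have [l2 [H2 H2']] := IH (fun B' HB' => H B' (or_intror HB')).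
exists (l1 ++ l2); split; first by move=> U /List.in_app_iff [] ?; [apply: H1|apply: H2].
move=> z; case: (H2' z) => [Hs|[V [HV Vz]]]; last first.
  by right; exists V; split => //; apply/List.in_app_iff; right.
case: (H1' z) => [Bz|[V [HV Vz]]]; last first.
  by right; exists V; split => //; apply/List.in_app_iff; left.
by left => B' [<-|HB'] //; apply: Hs.
Qed.

Lemma mt_greatest {disp : Order.disp_t} (L : tbLatticeType disp) (t : seq L) (c : L) :
  (forall a, List.In a t -> c <= a) -> c <= mt t.
Proof.
elim: t => [|b t IH] H /=; first exact: lex1.
by rewrite lexI H /= ?IH //; [move=> a Ha; apply: H; right|left].
Qed.

Section Top.
Context {disp : Order.disp_t} {L : tbLatticeType disp} {sup : (L -> Prop) -> L}
  (HL : is_frame sup).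

Local Notation X := (XL L).
Local Notation op := (@XL_opens _ L).
Local Notation le := (@XL_le _ L).

Definition pp (y : X) : prime_filter (proj1_sig y) := proj2_sig y.

Lemma op_ext (U V : X -> Prop) : (forall x, U x <-> V x) -> op U -> op V.
Proof.
move=> H oU x Vx; have [s [H1 [H2 H3]]] := oU x (proj2 (H x) Vx).
by exists s; split => //; split => // y /H3 /(H y).
Qed.

Lemma op_intro (U : X -> Prop) :
  (forall x, U x -> exists V, op V /\ V x /\ subset_of V U) -> op U.
Proof.
move=> H x /H [V [oV [Vx VU]]]; have [s [H1 [H2 H3]]] := oV x Vx.
by exists s; split => //; split => // y /H3 /VU.
Qed.

Lemma op_sub (B : X -> Prop) : XL_subbase B -> op B.
Proof.
move=> HB x Bx; exists [:: B]; split; first by move=> V [<-|].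
split; first by move=> V [<-|].
by move=> y /(_ B (or_introl erefl)).
Qed.

Lemma op_phi (a : L) : op (phi a).
Proof. by apply: op_sub; exists a; left. Qed.

Lemma op_nphi (a : L) : op (fun x => ~ phi a x).
Proof. by apply: op_sub; exists a; right. Qed.

Lemma op_meet (U V : X -> Prop) : op U -> op V -> op (fun x => U x /\ V x).
Proof.
move=> oU oV x [Ux Vx].
have [s1 [H1 [H2 H3]]] := oU x Ux; have [s2 [H1' [H2' H3']]] := oV x Vx.
exists (s1 ++ s2); split; last split.
- by move=> W /List.in_app_iff [] ?; [apply: H1|apply: H1'].
- by move=> W /List.in_app_iff [] ?; [apply: H2|apply: H2'].
- move=> y Hy; split; [apply: H3|apply: H3'] => W HW; apply: Hy;
  apply/List.in_app_iff; auto.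
Qed.

Lemma op_True : op (fun _ => True).
Proof.
have H : forall x : X, phi \top x <-> True by move=> x; split => // _; apply: pf_top (pp x).
exact (op_ext _ _ H (op_phi \top)).
Qed.

Lemma op_False : op (fun _ => False).
Proof. by move=> x. Qed.

Lemma op_join2 (U V : X -> Prop) : op U -> op V -> op (fun x => U x \/ V x).
Proof.
move=> oU oV; apply: op_intro => x [Ux|Vx].
  by exists U; split => //; split => // y; left.
by exists V; split => //; split => // y; right.
Qed.

Lemma basic (U : X -> Prop) (x : X) : op U -> U x ->
  exists c d, phi c x /\ ~ phi d x /\ (forall y, phi c y -> ~ phi d y -> U y).
Proof.
move=> oU Ux; have [s [H1 [H2 H3]]] := oU x Ux.
suff [c [d [Hc [Hd H]]]] : exists c d, phi c x /\ ~ phi d x /\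
    (forall y, phi c y -> ~ phi d y -> forall V, List.In V s -> V y).
  by exists c, d; split => //; split => // y Hcy Hdy; apply: H3; apply: H.
elim: s H1 H2 {H3} => [|V s IH] H1 H2.
  exists \top, \bot; split; first exact: pf_top (pp x).
  by split; [exact: pf_bot (pp x)|].
have [c [d [Hc [Hd H]]]] := IH (fun W HW => H1 W (or_intror HW)) (fun W HW => H2 W (or_intror HW)).
have HV := H2 V (or_introl erefl).
case: (H1 V (or_introl erefl)) => a [EV|EV]; rewrite EV in HV.
  exists (c `&` a), d; split; first exact: pf_meet (pp x) _ _ Hc HV.
  split => // y /(pf_meetE (pp y)) [Hcy Hay] Hdy W [<-|HW]; first by rewrite EV.
  exact: H.
exists c, (d `|` a); split => //; split.
  by move/(pf_join (pp x)) => [].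
move=> y Hcy Hdy W [<-|HW].
  by rewrite EV => Hay; apply: Hdy; apply: pf_up (pp y) _ _ Hay _; apply: leUr.
apply: H => // Hdy'; apply: Hdy; apply: pf_up (pp y) _ _ Hdy' _; apply: leUl.
Qed.

Lemma phi_clopen (a : L) : clopen_set op (phi a).
Proof. by split; [apply: op_phi|apply: op_nphi]. Qed.

Lemma nphi_clopen (a : L) : clopen_set op (fun x => ~ phi a x).
Proof.
split; first exact: op_nphi.
by apply: op_ext (op_phi a) => x; split => [H|/NNPP].
Qed.

Lemma phi_up (a : L) : upset le (phi a).
Proof. by move=> x y Hx Hxy; apply: Hxy. Qed.

Lemma phi_clopup (a : L) : clopup op le (phi a).
Proof. by split; [apply: phi_clopen|apply: phi_up]. Qed.

Lemma X_compact : compact_space op.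
Proof.
move=> C Cop Ccov; apply: NNPP => nfs.
pose nf := fun D : (X -> Prop) -> Prop => ~ exists s : seq (X -> Prop),
   (forall U, List.In U s -> D U) /\ (forall x, exists U, List.In U s /\ U x).
pose P := fun D : (X -> Prop) -> Prop => (forall U, D U -> op U) /\ nf D.
have [M [[Mop Mnf] [CM Mmax]]] : exists M, P M /\ subset_of C M /\
    forall B, P B -> subset_of M B -> subset_of B M.
  apply: zorn_sets; first by split.
  move=> Ch ChP Chtot Chne; split.
    by move=> U [A [ChA AU]]; case: (ChP A ChA) => H _; apply: H.
  move=> [s [Hs Hcov]].
  suff [A [ChA HA]] : exists A, Ch A /\ forall U, List.In U s -> A U.
    by case: (ChP A ChA) => _; apply; exists s.
  elim: s Hs {Hcov} => [|U s IH] Hs.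
    by case: Chne => A ChA; exists A.
  have [A1 [ChA1 A1U]] := Hs U (or_introl erefl).
  have [A2 [ChA2 HA2]] := IH (fun V HV => Hs V (or_intror HV)).
  case: (Chtot A1 A2 ChA1 ChA2) => sub.
    by exists A2; split => // V [<-|HV]; [apply: sub|apply: HA2].
  by exists A1; split => // V [<-|HV] //; apply: sub; apply: HA2.
have step1 : forall B, XL_subbase B -> ~ M B -> exists l, (forall U, List.In U l -> M U) /\
    forall z, B z \/ exists V, List.In V l /\ V z.
  move=> B sB nMB.
  have nP : ~ P (fun V => M V \/ V = B).
    move=> HP; apply: nMB; apply: (Mmax _ HP) => //; [by move=> V; left|by right].
  have [s [Hs Hcov]] : exists s : seq (X -> Prop),
      (forall U, List.In U s -> M U \/ U = B) /\ (forall x, exists U, List.In U s /\ U x).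
    apply: NNPP => ne; apply: nP; split => //.
    by move=> U [/Mop|->] //; apply: op_sub.
  have [l [Hl1 Hl2]] := list_split_P _ _ _ _ Hs.
  exists l; split => // z; have [U [HU Uz]] := Hcov z.
  by case: (Hl2 U HU) => [Hl|EU]; [right; exists U|left; rewrite -EU].
have step2 : forall x, exists B, XL_subbase B /\ M B /\ B x.
  move=> x; have [U [CU Ux]] := Ccov x.
  have [s [H1 [H2 H3]]] := Cop U CU x Ux.
  apply: NNPP => nex.
  have nM : forall B, List.In B s -> ~ M B.
    by move=> B HB MB; apply: nex; exists B; split; [apply: H1|split => //; apply: H2].
  suff [l [Hl1 Hl2]] : exists l, (forall U, List.In U l -> M U) /\
      forall z, (forall B, List.In B s -> B z) \/ exists V, List.In V l /\ V z.
    apply: Mnf; exists (U :: l); split; first by move=> V [<-|HV]; [apply: CM|apply: Hl1].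
    move=> z; case: (Hl2 z) => [Hz|[V [HV Vz]]]; first by exists U; split; [left|apply: H3].
    by exists V; split; [right|].
  apply: cover_combine => B HB; apply: step1; [exact: H1|exact: nM].
pose A := fun a => M (phi a).
pose Bs := fun b => M (fun x : X => ~ phi b x).
have [|||||||x [Hx1 Hx2]] := pft HL
  (F := fun c => exists t, (forall b, List.In b t -> Bs b) /\ mt t <= c)
  (I := fun c => exists t, (forall a, List.In a t -> A a) /\ c <= jn t).
- move=> c d [t [Ht H]] cd; exists t; split => //; exact: le_trans H cd.
- move=> c d [t1 [Ht1 H1]] [t2 [Ht2 H2]]; exists (t1 ++ t2); split.
    by move=> b /List.in_app_iff [] ?; [apply: Ht1|apply: Ht2].
  rewrite lexI; apply/andP; split; [apply: le_trans H1|apply: le_trans H2];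
    apply: mt_greatest => a Ha; apply: mt_lb; apply/List.in_app_iff; auto.
- by exists [::]; split.
- move=> c d [t [Ht H]] cd; exists t; split => //; exact: le_trans cd H.
- move=> c d [t1 [Ht1 H1]] [t2 [Ht2 H2]]; exists (t1 ++ t2); split.
    by move=> b /List.in_app_iff [] ?; [apply: Ht1|apply: Ht2].
  rewrite leUx; apply/andP; split; [apply: le_trans H1 _|apply: le_trans H2 _];
    apply: jn_least => a Ha; apply: jn_ub; apply/List.in_app_iff; auto.
- by exists [::]; split.
- move=> c [tb [Htb Hb]] [ta [Hta Ha]]; apply: Mnf.
  exists (map (fun a => phi a) ta ++ map (fun b => fun x : X => ~ phi b x) tb); split.
    move=> U /List.in_app_iff [/List.in_map_iff [a [<- Ha']]|/List.in_map_iff [b [<- Hb']]].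
      exact: Hta.
    exact: Htb.
  move=> z; case: (classic (forall b, List.In b tb -> phi b z)) => Hz.
    have zj : phi (jn ta) z by exact: (pf_up (pp z) (pf_mt (pp z) Hz) (le_trans Hb Ha)).
    have [a [Ha' za]] := pf_jn (pp z) zj.
    exists (phi a); split => //; apply/List.in_app_iff; left; apply/List.in_map_iff.
    by exists a; split.
  have [b [Hb' nzb]] : exists b, List.In b tb /\ ~ phi b z.
    by apply: NNPP => ne; apply: Hz => b Hb'; apply: NNPP => nb; apply: ne; exists b.
  exists (fun x => ~ phi b x); split => //; apply/List.in_app_iff; right.
  by apply/List.in_map_iff; exists b; split.
have [B [[a [EB|EB]] [MB Bx]]] := step2 x; rewrite EB in MB Bx.
  apply: (Hx2 a) Bx; exists [:: a]; split; first by move=> a' [<-|].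
  exact: leUl.
apply: Bx; apply: Hx1; exists [:: a]; split; first by move=> a' [<-|].
exact: leIl.
Qed.

End Top.

Import Order.TTheory.
Local Open Scope order_scope.

Section Esp.
Context {disp : Order.disp_t} {L : tbLatticeType disp} {sup : (L -> Prop) -> L}
  (HL : is_frame sup).

Local Notation X := (XL L).
Local Notation op := (@XL_opens _ L).
Local Notation le := (@XL_le _ L).
Arguments op_ext {disp L} [U V].

Lemma ph_up (y : X) (a b : L) : phi a y -> a <= b -> phi b y.
Proof. exact: (@pf_up _ _ _ (pp y) a b). Qed.
Lemma ph_meet (y : X) (a b : L) : phi a y -> phi b y -> phi (a `&` b) y.
Proof. exact: (@pf_meet _ _ _ (pp y) a b). Qed.
Lemma ph_meetE (y : X) (a b : L) : phi (a `&` b) y -> phi a y /\ phi b y.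
Proof. exact: (@pf_meetE _ _ _ (pp y) a b). Qed.
Lemma ph_join (y : X) (a b : L) : phi (a `|` b) y -> phi a y \/ phi b y.
Proof. exact: (@pf_join _ _ _ (pp y) a b). Qed.
Lemma ph_top (y : X) : phi \top y.
Proof. exact: (@pf_top _ _ _ (pp y)). Qed.
Lemma ph_bot (y : X) : ~ phi \bot y.
Proof. exact: (@pf_bot _ _ _ (pp y)). Qed.
Lemma ph_sup (y : X) (S : L -> Prop) (s : L) : S s -> phi s y -> phi (sup S) y.
Proof. move=> Ss sy; apply: ph_up sy _; exact: supU. Qed.

Arguments ph_up [y a b].
Arguments ph_meet [y a b].
Arguments ph_meetE [y a b].
Arguments ph_join [y a b].
Arguments ph_sup [y S s].

Lemma XL_eq (x y : X) : (forall a, proj1_sig x a <-> proj1_sig y a) -> x = y.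
Proof.
move=> H; apply: eq_sig_hprop; first by move=> ? ? ?; apply: proof_irrelevance.
apply: functional_extensionality => a; apply: propositional_extensionality; exact: H.
Qed.

Lemma cpt_closed (K : X -> Prop) (C : (X -> Prop) -> Prop) :
  closed_set op K -> (forall U, C U -> op U) -> (forall x, K x -> exists U, C U /\ U x) ->
  exists s, (forall U, List.In U s -> C U) /\ forall x, K x -> exists U, List.In U s /\ U x.
Proof.
move=> cK Cop Ccov.
have [s [Hs Hcov]] : exists s : seq (X -> Prop), (forall U, List.In U s -> C U \/ U = (fun x => ~ K x)) /\
    forall x, exists U, List.In U s /\ U x.
  apply: (X_compact HL) => [U [/Cop|->] //|x].
  case: (classic (K x)) => Kx.
    by have [U [CU Ux]] := Ccov x Kx; exists U; split => //; left.
  by exists (fun x => ~ K x); split => //; right.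
have [s' [H1 H2]] := list_split_P _ _ _ _ Hs.
exists s'; split => // x Kx; have [U [HU Ux]] := Hcov x.
case: (H2 U HU) => [HU'|EU]; first by exists U.
by rewrite EU in Ux.
Qed.

Lemma openup_nbhd (U : X -> Prop) : op U -> upset le U ->
  forall x, U x -> exists a, phi a x /\ subset_of (phi a) U.
Proof.
move=> oU uU x Ux.
have cK : closed_set op (fun y => ~ U y).
  by apply: (op_ext _ oU) => y; split => [H|/NNPP] //; move=> nH.
have [||s [Hs Hcov]] := cpt_closed (fun y => ~ U y)
   (fun V => exists a, phi a x /\ V = (fun y => ~ phi a y)) cK.
- by move=> V [a [_ ->]]; apply: op_nphi.
- move=> y nUy.
  have [a Ha] : exists a, ~ (proj1_sig x a -> proj1_sig y a).
    apply: NNPP => ne; apply: nUy; apply: uU Ux _ => a xa.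
    by apply: NNPP => nya; apply: ne; exists a => /(_ xa).
  exists (fun y => ~ phi a y); split.
    exists a; split => //; apply: NNPP => nxa; apply: Ha => xa; exfalso; exact: nxa xa.
  by move=> ya; apply: Ha.
suff [c [Hc Hc']] : exists c, phi c x /\ forall y, (exists V, List.In V s /\ V y) -> ~ phi c y.
  exists c; split => // y cy; apply: NNPP => nUy.
  by have [V [HV Vy]] := Hcov y nUy; apply: (Hc' y) cy; exists V.
elim: s Hs {Hcov} => [|V s IH] Hs.
  by exists \top; split; [exact: ph_top x|move=> y [V []]].
have [c [Hc Hc']] := IH (fun W HW => Hs W (or_intror HW)).
have [a [xa EV]] := Hs V (or_introl erefl).
exists (c `&` a); split; first exact: (@pf_meet _ _ _ (pp x) c a Hc xa).
move=> y [W [[<-|HW] Wy]] /ph_meetE [cy ay].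
  by move: Wy; rewrite EV.
by apply: (Hc' y) cy; exists W.
Qed.

Lemma clopup_phi (U : X -> Prop) : clopup op le U -> exists a, forall x, U x <-> phi a x.
Proof.
move=> [[oU cU] uU].
have [||s [Hs Hcov]] := cpt_closed U (fun V => exists a, V = phi a /\ subset_of (phi a) U) cU.
- by move=> V [a [-> _]]; apply: op_phi.
- move=> x Ux; have [a [xa sa]] := openup_nbhd U oU uU x Ux.
  by exists (phi a); split => //; exists a.
suff [d [Hd Hd']] : exists d, subset_of (phi d) U /\ forall y, (exists V, List.In V s /\ V y) -> phi d y.
  exists d => x; split; last exact: Hd.
  by move=> Ux; apply: Hd'; apply: Hcov.
elim: s Hs {Hcov} => [|V s IH] Hs.
  exists \bot; split; last by move=> y [V []].
  by move=> y /(ph_bot y).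
have [d [Hd Hd']] := IH (fun W HW => Hs W (or_intror HW)).
have [a [EV sa]] := Hs V (or_introl erefl).
exists (d `|` a); split.
  by move=> y /ph_join [/Hd|/sa].
move=> y [W [[<-|HW] Wy]].
  by rewrite EV in Wy; apply: (@pf_up _ _ _ (pp y) a _ Wy); apply: leUr.
apply: (@pf_up _ _ _ (pp y) d); last exact: leUl.
by apply: Hd'; exists W.
Qed.

Lemma closure_ext (U V : X -> Prop) : (forall x, U x <-> V x) ->
  forall x, Defs.closure op U x -> Defs.closure op V x.
Proof.
move=> H x Hx W oW Wx; have [y [Wy Uy]] := Hx W oW Wx.
by exists y; split => //; apply/H.
Qed.

Lemma closure_mono (U V : X -> Prop) : subset_of U V -> subset_of (Defs.closure op U) (Defs.closure op V).
Proof.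
move=> H x Hx W oW Wx; have [y [Wy Uy]] := Hx W oW Wx.
by exists y; split => //; apply: H.
Qed.

Lemma closure_sub_closed (U K : X -> Prop) : closed_set op K -> subset_of U K ->
  subset_of (Defs.closure op U) K.
Proof.
move=> cK UK x Hx; apply: NNPP => nKx.
by have [y [nKy Uy]] := Hx _ cK nKx; apply: nKy; apply: UK.
Qed.

Lemma closure_union (S : L -> Prop) (x : X) :
  Defs.closure op (fun y => exists a, S a /\ phi a y) x <-> phi (sup S) x.
Proof.
split.
  apply: closure_sub_closed; first exact: op_nphi.
  by move=> y [a [Sa ay]]; apply: ph_sup Sa ay.
move=> Hx V oV Vx.
have [c [d [cx [ndx Hcd]]]] := basic V x oV Vx.
have [s [Ss ncs]] : exists s, S s /\ ~ (c `&` s <= d).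
  apply: NNPP => ne; apply: ndx; apply: ph_up (ph_meet cx Hx) _.
  apply: (@meet_sup_le _ _ sup HL S c d) => s Ss; apply: NNPP => nle; apply: ne; exists s; by split.
have [y [ycs nyd]] := sep HL ncs.
have [yc ys] := pf_meetE (pp y) ycs.
by exists y; split; [apply: Hcd|exists s].
Qed.

Lemma openup_union (U : X -> Prop) : op U -> upset le U ->
  forall x, U x <-> exists a, subset_of (phi a) U /\ phi a x.
Proof.
move=> oU uU x; split; last by move=> [a [sa ax]]; apply: sa.
by move=> Ux; have [a [ax sa]] := openup_nbhd U oU uU x Ux; exists a.
Qed.

Lemma closure_openup (U : X -> Prop) : op U -> upset le U ->
  forall x, Defs.closure op U x <-> phi (sup (fun a => subset_of (phi a) U)) x.
Proof.
move=> oU uU x; rewrite -closure_union; split; apply: closure_ext => y.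
  exact: openup_union.
by split; move/(openup_union U oU uU y).
Qed.

Lemma down_basic (c d : L) (y : X) :
  down le (fun z => phi c z /\ ~ phi d z) y <-> ~ phi (imp sup c d) y.
Proof.
split.
  move=> [z [[cz ndz] yz]] Hi; apply: ndz.
  apply: ph_up (ph_meet (yz _ Hi) cz) _.
  by apply/(impP HL).
move=> nyi.
have [|||||||z [Hz1 Hz2]] := pft HL (F := fun e => exists f, phi f y /\ f `&` c <= e)
   (I := fun e => e <= d).
- by move=> e e' [f [fy H]] ee'; exists f; split => //; apply: le_trans H ee'.
- move=> e e' [f [fy H]] [f' [fy' H']]; exists (f `&` f'); split.
    exact: ph_meet fy fy'.
  rewrite lexI; apply/andP; split.
    by apply: le_trans H; apply: leI2 => //; apply: leIl.
  by apply: le_trans H'; apply: leI2 => //; apply: leIr.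
- by exists \top; split; [exact: ph_top y|exact: lex1].
- by move=> e e' H1 H2; apply: le_trans H2 H1.
- by move=> e e' H1 H2; rewrite leUx H1 H2.
- exact: le0x.
- move=> e [f [fy H]] ed; apply: nyi; apply: ph_up fy _.
  by apply/(impP HL); apply: le_trans H ed.
exists z; split; last first.
  by move=> f fy; apply: Hz1; exists f; split => //; apply: leIl.
split; first by apply: Hz1; exists \top; split; [exact: ph_top y|exact: leIr].
by apply: Hz2.
Qed.

Lemma down_clopen (U : X -> Prop) : clopen_set op U -> clopen_set op (down le U).
Proof.
move=> [oU cU].
have [||s [Hs Hcov]] := cpt_closed U (fun V => exists c d,
    V = (fun z => phi c z /\ ~ phi d z) /\ subset_of V U) cU.
- move=> V [c [d [-> _]]]; apply: op_meet; [apply: op_phi|apply: op_nphi].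
- move=> x Ux; have [c [d [cx [ndx H]]]] := basic U x oU Ux.
  exists (fun z => phi c z /\ ~ phi d z); split; last by split.
  by exists c, d; split => // z [cz ndz]; apply: H.
have [e He] : exists e, forall y, (exists V, List.In V s /\ down le V y) <-> ~ phi e y.
  elim: s Hs {Hcov} => [|V s IH] Hs.
    exists \top => y; split; first by move=> [V []].
    by move=> H; exfalso; apply: H; apply: ph_top y.
  have [e He] := IH (fun W HW => Hs W (or_intror HW)).
  have [c [d [EV _]]] := Hs V (or_introl erefl).
  exists (e `&` imp sup c d) => y; split.
    move=> [W [[<-|HW] HWy]] /ph_meetE [ey iy].
      by rewrite EV in HWy; exact: (proj1 (down_basic c d y) HWy iy).
    by apply: (proj1 (He y)) ey; exists W.
  move=> nei; case: (classic (phi e y)) => ey.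
    case: (classic (phi (imp sup c d) y)) => iy.
      by exfalso; apply: nei; apply: ph_meet ey iy.
    by exists V; split; [left|rewrite EV; apply: (proj2 (down_basic c d y))].
  by have [W [HW HWy]] := proj2 (He y) ey; exists W; split => //; right.
have E : forall y, down le U y <-> ~ phi e y.
  move=> y; rewrite -He; split.
    move=> [x [Ux yx]]; have [V [HV Vx]] := Hcov x Ux.
    by exists V; split => //; exists x.
  move=> [V [HV [x [Vx yx]]]]; exists x; split => //.
  by have [c [d [_ sV]]] := Hs V HV; apply: sV.
have [o1 o2] := nphi_clopen e.
split; first by apply: (op_ext _ o1) => y; rewrite E.
by apply: (op_ext _ o2) => y; rewrite E.
Qed.

Lemma X_Lspace : L_space op le.
Proof.
split; last split.
- split; last split.
  + split; first exact: X_compact HL.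
    split.
    * move=> x y nxy.
      have [a Ha] : exists a, ~ (proj1_sig x a <-> proj1_sig y a).
        by apply: NNPP => ne; apply: nxy; apply: XL_eq => a; apply: NNPP => H; apply: ne; exists a.
      case: (classic (proj1_sig x a)) => xa.
        exists (phi a), (fun z => ~ phi a z); split; first exact: op_phi.
        split; first exact: op_nphi.
        split => //; split; last by move=> z [].
        by move=> ya; apply: Ha; split.
      exists (fun z => ~ phi a z), (phi a); split; first exact: op_nphi.
      split; first exact: op_phi.
      split => //; split; last by move=> z [].
      by apply: NNPP => nya; apply: Ha; split => // /xa.
    * move=> U oU x Ux; have [c [d [cx [ndx H]]]] := basic U x oU Ux.
      exists (fun z => phi c z /\ ~ phi d z); split; last first.
        by split; [split|move=> z [cz ndz]; apply: H].
      split; first by apply: op_meet; [apply: op_phi|apply: op_nphi].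
      apply: (op_ext _ (op_join2 _ _ (op_nphi c) (op_phi d))) => z; split.
        by move=> [H1|H2] [H3 H4].
      by move=> H1; case: (classic (phi c z)) => H2; [right; apply: NNPP => H3; apply: H1; split|left].
  + split; first by move=> x a.
    split; first by move=> x y z H1 H2 a /H1 /H2.
    by move=> x y H1 H2; apply: XL_eq => a; split; [apply: H1|apply: H2].
  + move=> x y nxy.
    have [a Ha] : exists a, ~ (proj1_sig x a -> proj1_sig y a).
      by apply: NNPP => ne; apply: nxy => a xa; apply: NNPP => nya; apply: ne; exists a => h; exact: nya (h xa).
    exists (phi a); split; first exact: phi_clopup.
    split; [apply: NNPP => nxa; apply: Ha => xa; exfalso; exact: nxa xa|move=> ya; apply: Ha => _; exact: ya].
- exact: down_clopen.
- move=> U oU uU.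
  apply: (op_ext _ (op_phi (sup (fun a => subset_of (phi a) U)))) => x.
  by split => /(closure_openup U oU uU x).
Qed.

End Esp.

Import Order.TTheory.
Local Open Scope order_scope.

Lemma extract_list {disp : Order.disp_t} {L : tbLatticeType disp} (T : Type)
  (S : L -> Prop) (f : L -> T -> Prop) (s : seq (T -> Prop)) :
  (forall U, List.In U s -> exists c, S c /\ U = f c) ->
  exists t, (forall c, List.In c t -> S c) /\
    forall z, (exists U, List.In U s /\ U z) -> exists c, List.In c t /\ f c z.
Proof.
elim: s => [|U s IH] H; first by exists [::]; split => // z [U []].
have [t [H1 H2]] := IH (fun V HV => H V (or_intror HV)).
have [c [Sc EU]] := H U (or_introl erefl).
exists (c :: t); split; first by move=> c' [<-|Hc'] //; apply: H1.
move=> z [V [[<-|HV] Vz]]; first by exists c; split; [left|rewrite -EU].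
by have [c' [Hc' fz]] := H2 z (ex_intro _ V (conj HV Vz)); exists c'; split; [right|].
Qed.

Section Fin.
Context {disp : Order.disp_t} {L : tbLatticeType disp} {sup : (L -> Prop) -> L}
  (HL : is_frame sup).

Local Notation X := (XL L).
Local Notation op := (@XL_opens _ L).
Local Notation le := (@XL_le _ L).
Arguments op_ext {disp L} [U V].
Arguments ph_up {disp L} [y a b].
Arguments ph_meet {disp L} [y a b].
Arguments ph_meetE {disp L} [y a b].
Arguments ph_join {disp L} [y a b].
Arguments ph_sup {disp L sup} HL [y S s].

Lemma ph_jn (y : X) (t : seq L) : phi (jn t) y -> exists a, List.In a t /\ phi a y.
Proof. exact: (@pf_jn _ _ _ (pp y) t). Qed.

Lemma compl_down (c : L) : complemented sup c -> downset le (phi c).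
Proof.
move=> Hc z w zc wz.
have [[H|H] H'] := pf_compl HL (pp w) Hc => //.
by exfalso; apply: (proj2 (pf_compl HL (pp z) Hc)); split => //; apply: wz.
Qed.

Lemma clopup_True : clopup op le (fun _ : X => True).
Proof.
split; last by [].
split; first exact: op_True.
by apply: (op_ext _ op_False) => x; split.
Qed.

Lemma stoneL_of_frame : stone_frame sup -> stone_L_space op le.
Proof.
move=> [cpt zd]; split; first exact: X_Lspace HL.
split.
  move=> x; exists (fun _ => True); split; first exact: clopup_True.
  split => //.
  move=> W oW uW HW z _.
  pose S := fun a => subset_of (phi a) W.
  have top : \top <= sup S.
    apply: (phi_le HL) => y _; apply/(closure_openup HL W oW uW y); exact: HW.
  have [t [Ht Hle]] := cpt S top.
  rewrite (sup_list HL) in Hle.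
  have [a [Ha za]] := ph_jn z t (ph_up (ph_top z) Hle).
  exact: (Ht a Ha).
move=> U HU x Ux.
have [a Ha] := clopup_phi HL U HU.
pose Sa := fun c => complemented sup c /\ c <= a.
have H : phi (sup Sa) x by rewrite -(zd a); apply/Ha.
move/(closure_union HL): H; apply: closure_mono => y [c [[Hc ca] cy]].
exists (phi c); split; first exact: phi_clopen.
split; first exact: phi_up.
split; first exact: compl_down.
split => // z cz; apply/Ha; exact: ph_up cz ca.
Qed.

Lemma frame_of_stoneL : stone_L_space op le -> stone_frame sup.
Proof.
move=> [_ [Lc dens]]; split.
  move=> S top.
  pose W := fun x => exists a, S a /\ phi a x.
  have oW : op W.
    apply: op_intro => x [a [Sa ax]]; exists (phi a); split; first exact: op_phi.
    by split => // y ay; exists a.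
  have uW : upset le W by move=> x y [a [Sa ax]] xy; exists a; split => //; apply: xy.
  have allW : forall x, W x.
    move=> x; have [V [_ [VW Vx]]] := Lc x; apply: VW Vx => //.
    by move=> y _; apply/(closure_union HL); apply: ph_up (ph_top y) top.
  have [s [Hs Hcov]] := X_compact HL (fun U => exists a, S a /\ U = phi a)
     (fun U HU => let: ex_intro a (conj _ E) := HU in eq_ind_r _ (op_phi a) E)
     (fun x => let: ex_intro a (conj Sa ax) := allW x in
          ex_intro _ (phi a) (conj (ex_intro _ a (conj Sa erefl)) ax)).
  have [t [Ht Hcov']] := extract_list X S (fun a => phi a) s Hs.
  exists t; split => //; rewrite (sup_list HL).
  apply: (phi_le HL) => x _; have [a [Ha ax]] := Hcov' x (Hcov x).
  exact: ph_up ax (jn_ub Ha).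
move=> a; pose Sa := fun c => complemented sup c /\ c <= a.
apply: le_anti; apply/andP; split; last by apply: (supL HL) => c [].
apply: (phi_le HL) => x ax.
have := dens (phi a) (phi_clopup a) x ax.
apply: closure_sub_closed; first exact: op_nphi.
move=> y [V [[oV cV] [uV [dV [sV Vy]]]]].
have [c Hc] := clopup_phi HL V (conj (conj oV cV) uV).
have [d Hd] : exists d, forall x, ~ V x <-> phi d x.
  apply: clopup_phi HL _ _; split; last first.
    by move=> z w nVz zw Vw; apply: nVz; apply: dV Vw zw.
  split => //; apply: (op_ext _ oV) => z; split => [Vz nVz|/NNPP] //.
have cc : complemented sup c.
  apply: (@compl_of _ _ _ HL c d).
    apply: le_anti; apply/andP; split; last exact: le0x.
    apply: (phi_le HL) => z /ph_meetE [cz dz].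
    by exfalso; exact: (proj2 (Hd z) dz) (proj2 (Hc z) cz).
  apply: (phi_le HL) => z _; case: (classic (V z)) => Vz.
    by apply: ph_up (proj1 (Hc z) Vz) (leUl _ _).
  by apply: ph_up (proj1 (Hd z) Vz) (leUr _ _).
have ca : c <= a by apply: (phi_le HL) => z /Hc /sV.
by apply: (ph_sup HL (S := Sa) (s := c)) => //; apply/Hc.
Qed.

End Fin.

Import Order.TTheory.
Local Open Scope order_scope.

Section Ysp.
Context {disp : Order.disp_t} {L : tbLatticeType disp} {sup : (L -> Prop) -> L}
  (HL : is_frame sup).

Local Notation X := (XL L).
Local Notation Y := (YL L).
Local Notation op := (@XL_opens _ L).
Local Notation opY := (@YL_opens _ L).
Local Notation le := (@XL_le _ L).
Arguments op_ext {disp L} [U V].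
Arguments ph_up {disp L} [y a b].
Arguments ph_meet {disp L} [y a b].
Arguments ph_meetE {disp L} [y a b].
Arguments ph_join {disp L} [y a b].
Arguments ph_sup {disp L sup} HL [y S s].

Lemma Y_cp (y : Y) (S : L -> Prop) : phi (sup S) (proj1_sig y) ->
  exists s, S s /\ phi s (proj1_sig y).
Proof.
move=> Hy; have [oD cD] := proj2_sig y.
set D := down le (fun z => z = proj1_sig y) in oD cD.
have [d Hd] : exists d, forall x, ~ D x <-> phi d x.
  apply: clopup_phi HL _ _; split; last first.
    move=> z w nDz zw [x [-> wx]]; apply: nDz; exists (proj1_sig y); split => //.
    by move=> a /zw /wx.
  split => //; apply: (op_ext _ oD) => z; split => [Dz nDz|/NNPP] //.
have nyd : ~ phi d (proj1_sig y).
  by move/(Hd (proj1_sig y)); apply; exists (proj1_sig y); split => // a.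
apply: NNPP => ne; apply: nyd; apply: ph_up Hy _.
apply: (supL HL) => s Ss; apply: (phi_le HL) => x xs.
apply/(Hd x) => [[x' [E xy]]]; subst x'.
by apply: ne; exists s; split => //; apply: xy.
Qed.

Lemma cp_Y (x : X) : (forall S, phi (sup S) x -> exists s, S s /\ phi s x) ->
  clopen_set op (down le (fun z => z = x)).
Proof.
move=> cp; pose d := sup (fun a => ~ phi a x).
have nxd : ~ phi d x by move/cp => [s [ns xs]].
have E : forall z, down le (fun z => z = x) z <-> ~ phi d z.
  move=> z; split.
    by move=> [x' [-> zx]] /zx.
  move=> nzd; exists x; split => // a za; apply: NNPP => nxa; apply: nzd.
  by apply: ph_up za _; apply: (supU HL).
have [o1 o2] := nphi_clopen d.
split; first by apply: (op_ext _ o1) => z; rewrite E.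
by apply: (op_ext _ o2) => z; rewrite E.
Qed.

Lemma mkY (F : L -> Prop) : completely_prime_filter sup F ->
  exists y : Y, forall a, phi a (proj1_sig y) <-> F a.
Proof.
move=> [lf cp].
have pF : prime_filter F.
  split => //; split.
    by rewrite -(sup_empty HL) => /cp [s []].
  by move=> a b; rewrite -(sup_pair HL) => /cp [s [[->|->] Fs]]; [left|right].
pose x := exist (fun F => prime_filter F) F pF : X.
have Hx : clopen_set op (down le (fun z => z = x)) by apply: cp_Y => S /cp.
by exists (exist _ x Hx).
Qed.

Lemma Y_sep (sp : spatial_frame sup) (a b : L) : ~ a <= b ->
  exists y : Y, phi a (proj1_sig y) /\ ~ phi b (proj1_sig y).
Proof.
move=> nab.
have ne : a `&` b <> a by move=> E; apply: nab; apply/meet_idPl.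
have [F [cpF HF]] := sp _ _ ne.
have [y Hy] := mkY F cpF.
have [[_ [Fup Fmeet]] _] := cpF.
case: HF => [[F1 F2]|[F1 F2]].
  by exfalso; apply: F2; apply: Fup F1 _; apply: leIl.
exists y; split; first by apply/Hy.
by move/Hy => Fb; apply: F2; apply: Fmeet.
Qed.

Lemma Y_le (sp : spatial_frame sup) (a b : L) :
  (forall y : Y, phi a (proj1_sig y) -> phi b (proj1_sig y)) -> a <= b.
Proof.
move=> H; apply: NNPP => nab; have [y [ya nyb]] := Y_sep sp a b nab.
by apply: nyb; apply: H.
Qed.

Lemma Yop_phi (V : Y -> Prop) : opY V -> exists a, forall y, V y <-> phi a (proj1_sig y).
Proof.
move=> [U [cU ->]]; have [a Ha] := clopup_phi HL U cU.
by exists a => y; apply: Ha.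
Qed.

Lemma Yop_of (a : L) : opY (fun y => phi a (proj1_sig y)).
Proof. by exists (phi a); split => //; exact: phi_clopup. Qed.

Lemma Yop_ext (V V' : Y -> Prop) : (forall y, V y <-> V' y) -> opY V -> opY V'.
Proof.
move=> H; have -> // : V' = V.
apply: functional_extensionality => y; apply: propositional_extensionality.
by split => /H.
Qed.

Lemma stoneY_of_frame (sp : spatial_frame sup) : stone_frame sup -> stone_space opY.
Proof.
move=> [cpt zd].
have reg : forall (a : L) (y : Y), phi a (proj1_sig y) ->
    exists c, (complemented sup c /\ c <= a) /\ phi c (proj1_sig y).
  move=> a y ay; apply: Y_cp.
  by rewrite -(zd a).
split; last split.
- move=> C Cop Ccov.
  pose S := fun a => C (fun y => phi a (proj1_sig y)).
  have top : \top <= sup S.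
    apply: (Y_le sp) => y _.
    have [U [CU Uy]] := Ccov y.
    have [a Ha] := Yop_phi U (Cop U CU).
    have EU : U = (fun y => phi a (proj1_sig y)).
      apply: functional_extensionality => z; apply: propositional_extensionality.
      exact: Ha.
    apply: (ph_sup HL (S := S) (s := a)); first by rewrite /S -EU.
    by apply/Ha.
  have [t [Ht Hle]] := cpt S top.
  rewrite (sup_list HL) in Hle.
  exists (map (fun a => fun y : Y => phi a (proj1_sig y)) t); split.
    by move=> U /List.in_map_iff [a [<- Ha]]; apply: Ht.
  move=> y; have [a [Ha ya]] := ph_jn (proj1_sig y) t (ph_up (ph_top _) Hle).
  exists (fun y => phi a (proj1_sig y)); split => //.
  by apply/List.in_map_iff; exists a.
- have sep1 : forall (y1 y2 : Y) (a : L), phi a (proj1_sig y1) -> ~ phi a (proj1_sig y2) ->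
      exists U V, opY U /\ opY V /\ U y1 /\ V y2 /\ (forall z, ~ (U z /\ V z)).
    move=> y1 y2 a ay1 nay2.
    have [c [[Hc ca] cy1]] := reg a y1 ay1.
    exists (fun y => phi c (proj1_sig y)), (fun y => phi (pseudocompl sup c) (proj1_sig y)).
    split; first exact: Yop_of.
    split; first exact: Yop_of.
    split => //; split.
      have [[H|H] _] := pf_compl HL (pp (proj1_sig y2)) Hc => //.
      by exfalso; apply: nay2; apply: ph_up H ca.
    by move=> z; apply: (proj2 (pf_compl HL (pp (proj1_sig z)) Hc)).
  move=> y1 y2 ne.
  have nx : proj1_sig y1 <> proj1_sig y2.
    by move=> E; apply: ne; apply: eq_sig_hprop => // ? ? ?; apply: proof_irrelevance.
  have [a Ha] : exists a, ~ (phi a (proj1_sig y1) <-> phi a (proj1_sig y2)).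
    apply: NNPP => nex; apply: nx; apply: XL_eq => a.
    by apply: NNPP => H; apply: nex; exists a.
  case: (classic (phi a (proj1_sig y1))) => H1.
    by apply: (sep1 y1 y2 a H1) => H2; apply: Ha; split => _.
  have [|U [V [oU [oV [Uy [Vy disj]]]]]] := sep1 y2 y1 a _ H1.
    by apply: NNPP => H2; apply: Ha; split => // /H1.
  exists V, U; split => //; split => //; split => //; split => // z [Vz Uz].
  by apply: (disj z).
- move=> U oU y Uy.
  have [a Ha] := Yop_phi U oU.
  have [c [[Hc ca] cy]] := reg a y (proj1 (Ha y) Uy).
  exists (fun y => phi c (proj1_sig y)); split; last first.
    by split => // z cz; apply/Ha; apply: ph_up cz ca.
  split; first exact: Yop_of.
  apply: (Yop_ext _ _ _ (Yop_of (pseudocompl sup c))) => z.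
  have [H1 H2] := pf_compl HL (pp (proj1_sig z)) Hc.
  split; first by move=> pz cz; apply: H2.
  by move=> ncz; case: H1.
Qed.

Lemma frame_of_stoneY (sp : spatial_frame sup) : stone_space opY -> stone_frame sup.
Proof.
move=> [Ycpt [_ Yzd]]; split.
  move=> S top.
  have [s [Hs Hcov]] := Ycpt (fun V => exists c, S c /\ V = (fun y => phi c (proj1_sig y)))
     (fun V HV => let: ex_intro c (conj _ E) := HV in eq_ind_r _ (Yop_of c) E)
     (fun y => let: ex_intro c (conj Sc cy) := Y_cp y S (ph_up (ph_top _) top) in
        ex_intro _ (fun y => phi c (proj1_sig y)) (conj (ex_intro _ c (conj Sc erefl)) cy)).
  have [t [Ht Hcov']] := extract_list Y S (fun c y => phi c (proj1_sig y)) s Hs.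
  exists t; split => //; rewrite (sup_list HL).
  apply: (Y_le sp) => y _; have [a [Ha ay]] := Hcov' y (Hcov y).
  exact: ph_up ay (jn_ub Ha).
move=> a; pose Sa := fun c => complemented sup c /\ c <= a.
apply: le_anti; apply/andP; split; last by apply: (supL HL) => c [].
apply: (Y_le sp) => y ay.
have [V [[oV cV] [Vy sV]]] := Yzd _ (Yop_of a) y ay.
have [c Hc] := Yop_phi V oV.
have [d Hd] := Yop_phi _ cV.
have cc : complemented sup c.
  apply: (@compl_of _ _ _ HL c d).
    apply: le_anti; apply/andP; split; last exact: le0x.
    apply: (Y_le sp) => z /ph_meetE [cz dz].
    by exfalso; exact: (proj2 (Hd z) dz) (proj2 (Hc z) cz).
  apply: (Y_le sp) => z _; case: (classic (V z)) => Vz.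
    by apply: ph_up (proj1 (Hc z) Vz) (leUl _ _).
  by apply: ph_up (proj1 (Hd z) Vz) (leUr _ _).
have ca : c <= a by apply: (Y_le sp) => z /Hc /sV.
by apply: (ph_sup HL (S := Sa) (s := c)) => //; apply/Hc.
Qed.

End Ysp.

Theorem corollary5p18 (disp : Order.disp_t) (L : tbLatticeType disp)
  (sup : (L -> Prop) -> L) (HL : is_frame sup) :
  (stone_frame sup <-> stone_L_space (@XL_opens _ L) (@XL_le _ L)) /\
  (spatial_frame sup ->
     (stone_frame sup <-> stone_L_space (@XL_opens _ L) (@XL_le _ L)) /\
     (stone_frame sup <-> stone_space (@YL_opens _ L))).
Proof.
have P1 : stone_frame sup <-> stone_L_space (@XL_opens _ L) (@XL_le _ L).
  by split; [exact: stoneL_of_frame HL|exact: frame_of_stoneL HL].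
split => // sp; split => //.
by split; [exact: stoneY_of_frame HL sp|exact: frame_of_stoneY HL sp].
Qed.
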